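(* For every graph $G$ and integer $k$, calling naive-fvs$(G,k,\emptyset)$ returns a feedback vertex set of $G$ of size at most $k$ if $G$ has one, and returns ``NO'' otherwise.
   Context: All graphs are finite, simple and undirected; $d_G(v)$ denotes the degree of $v$ in $G$, $G-S$ denotes deletion of a vertex set $S$, and $G[S]$ the induced subgraph. A feedback vertex set of $G$ is a set $V_-\subseteq V(G)$ such that $G-V_-$ is a forest. Algorithm naive-fvs$(G,k,F)$ (with $k$ an integer and $F\subseteq V(G)$ inducing a forest) returns a set of vertices or ``NO'' as follows (all choices among several candidates are arbitrary; degrees are in the current graph $G$): (0) If $k<0$ return NO; if $V(G)=\emptyset$ return $\emptyset$. (1) If some vertex $v$ has degree less than $2$, return naive-fvs$(G-\{v\},k,F\setminus\{v\})$. (2) If some $v\in V(G)\setminus F$ has two neighbors in the same connected component of $G[F]$, let $X=$ naive-fvs$(G-\{v\},k-1,F)$ and return $X\cup\{v\}$ (NO if $X$ is NO). (3) Pick $v\in V(G)\setminus F$ of maximum degree. (4) If $d(v)=2$: set $X=\emptyset$; while $G$ contains a cycle $C$, take any vertex $x$ of $C$ not in $F$, add $x$ to $X$ and delete $x$ from $G$; then return $X$ if $|X|\le k$, else NO. (5) Let $X=$ naive-fvs$(G-\{v\},k-1,F)$; if $X$ is not NO, return $X\cup\{v\}$. (6) Return naive-fvs$(G,k,F\cup\{v\})$. *)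

(* Defs.v *)
From HB Require Import structures.
From mathcomp Require Import all_boot all_order all_algebra.
Set Implicit Arguments.
Unset Strict Implicit.
Unset Printing Implicit Defensive.
Import Order.TTheory GRing.Theory Num.Theory.

(* A finite simple graph is a finType T of vertices together with a symmetric,
   irreflexive adjacency relation e.  The "current graph" handled by the
   algorithm is the induced subgraph G[V] for a vertex set V : {set T}. *)

Section Graph.
Variables (T : finType) (e : rel T).

Definition deg (V : {set T}) (v : T) : nat := #|[set u in V | e v u]|.

Definition is_cycle (V : {set T}) (c : seq T) : Prop :=
  [/\ 3 <= size c, all (fun x => x \in V) c, uniq c & cycle e c].

Definition forest (V : {set T}) : Prop := ~ exists c, is_cycle V c.

Definition is_fvs (V X : {set T}) : Prop := X \subset V /\ forest (V :\: X).

Definition erestr (V F : {set T}) : rel T :=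
  [rel x y | [&& x \in V :&: F, y \in V :&: F & e x y]].

Definition two_nbrs_same_comp (V F : {set T}) (v : T) : Prop :=
  exists u w, [/\ u != w, u \in V :&: F, w \in V :&: F &
                  [/\ e v u, e v w & connect (erestr V F) u w]].

(* the while-loop of step (4): loop V F X X' means that, starting from the
   current graph G[V] and the accumulated set X, some run of the loop ends
   with accumulated set X' *)
Inductive loop4 (F : {set T}) : {set T} -> {set T} -> {set T} -> Prop :=
| loop4_done V X : forest V -> loop4 F V X X
| loop4_step V X X' c x :
    is_cycle V c -> x \in c -> x \notin F ->
    loop4 F (V :\ x) (x |: X) X' -> loop4 F V X X'.

(* naive V k F r : r is a possible result of naive-fvs(G[V], k, F)
   (None = "NO"), over all possible arbitrary choices. *)
Inductive naive : {set T} -> int -> {set T} -> option {set T} -> Prop :=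
| naive0_neg V k F : (k < 0)%R -> naive V k F None
| naive0_empty V k F : (0 <= k)%R -> V = set0 -> naive V k F (Some set0)
| naive1 V k F v r :
    (0 <= k)%R -> V != set0 ->
    v \in V -> deg V v < 2 ->
    naive (V :\ v) k (F :\ v) r -> naive V k F r
| naive2 V k F v r :
    (0 <= k)%R -> V != set0 ->
    (forall u, u \in V -> 2 <= deg V u) ->
    v \in V :\: F -> two_nbrs_same_comp V F v ->
    naive (V :\ v) (k - 1)%R F r -> naive V k F (omap (fun X => v |: X) r)
| naive4 V k F v X :
    (0 <= k)%R -> V != set0 ->
    (forall u, u \in V -> 2 <= deg V u) ->
    (forall u, u \in V :\: F -> ~ two_nbrs_same_comp V F u) ->
    v \in V :\: F -> (forall u, u \in V :\: F -> deg V u <= deg V v) ->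
    deg V v = 2 ->
    loop4 F V set0 X ->
    naive V k F (if (#|X|%:Z <= k)%R then Some X else None)
| naive5 V k F v X :
    (0 <= k)%R -> V != set0 ->
    (forall u, u \in V -> 2 <= deg V u) ->
    (forall u, u \in V :\: F -> ~ two_nbrs_same_comp V F u) ->
    v \in V :\: F -> (forall u, u \in V :\: F -> deg V u <= deg V v) ->
    deg V v != 2 ->
    naive (V :\ v) (k - 1)%R F (Some X) -> naive V k F (Some (v |: X))
| naive6 V k F v r :
    (0 <= k)%R -> V != set0 ->
    (forall u, u \in V -> 2 <= deg V u) ->
    (forall u, u \in V :\: F -> ~ two_nbrs_same_comp V F u) ->
    v \in V :\: F -> (forall u, u \in V :\: F -> deg V u <= deg V v) ->
    deg V v != 2 ->
    naive (V :\ v) (k - 1)%R F None ->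
    naive V k (F :|: [set v]) r -> naive V k F r.

End Graph.

(* Main.v *)
Require Import Defs.
From HB Require Import structures.
From mathcomp Require Import all_boot all_order all_algebra zify.
From Stdlib Require Import Classical.
Import Order.TTheory GRing.Theory Num.Theory.
Set Implicit Arguments.
Unset Strict Implicit.

Section S.
Variables (T : finType) (e : rel T).
Hypothesis e_sym : symmetric e.
Hypothesis e_irr : irreflexive e.

Definition restr (S : {set T}) : rel T := [rel a b | [&& a \in S, b \in S & e a b]].

Lemma restr_sym S : symmetric (restr S).
Proof. by move=> a b; rewrite /restr /= e_sym andbCA. Qed.

Lemma path_restr (S : {set T}) a p : all (fun z => z \in S) (a :: p) -> path e a p -> path (restr S) a p.
Proof.
move=> H; apply: (sub_in_path _ H) => u w uS wS euw.
by rewrite /restr /= euw andbT; apply/andP; split; [exact: uS|exact: wS].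
Qed.

Lemma cycle_nbrs W c y : is_cycle e W c -> y \in c ->
  exists a b, [/\ a != b, e y a, e y b & [/\ a \in c, b \in c, a != y, b != y &
    forall S : {set T}, (forall z, z \in c -> z != y -> z \in S) -> connect (restr S) a b]].
Proof.
case=> sz allW uq cy yc.
case: (rot_to yc) => i d hrot.
have cy' : cycle e (y :: d) by rewrite -hrot rot_cycle.
have uq' : uniq (y :: d) by rewrite -hrot rot_uniq.
have sz' : 3 <= size (y :: d) by rewrite -hrot size_rot.
have mem' : forall z, (z \in c) = (z \in y :: d) by move=> z; rewrite -hrot mem_rot.
case: d hrot cy' uq' sz' mem' => [|a [|h t]] // hrot cy' uq' sz' mem'.
have P1 : e y a && path e a (rcons (h::t) y) by exact: cy'.
move/andP: P1 => [eya]; rewrite rcons_path => /andP [pth elast].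
move: uq'; rewrite /= !inE => /andP [/norP [nya /norP [nyh nyt]]] /andP [/norP [nah nat] /andP [nht ut]].
have bin : last h t \in h :: t by apply: mem_last.
exists a, (last h t); split; last split.
- by apply/eqP => eab; move: bin; rewrite -eab inE (negbTE nah) (negbTE nat).
- done.
- by rewrite e_sym; exact: elast.
- by rewrite mem' !inE eqxx orbT.
- by rewrite mem' inE in_cons bin !orbT.
- by rewrite eq_sym.
- by apply/eqP => eb; move: bin; rewrite eb inE (negbTE nyh) (negbTE nyt).
- move=> S HS; apply/connectP; exists (h :: t) => //.
  apply: path_restr => //.
  apply/allP => z zin; apply: HS.
  + by rewrite mem' inE zin orbT.
  + by apply/eqP => ez; move: zin; rewrite ez !inE (negbTE nya) (negbTE nyh) (negbTE nyt).
Qed.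

Lemma restr_path (S : {set T}) u p : path (restr S) u p ->
  [/\ path e u p, {subset p <= S} & (p != [::] -> u \in S)].
Proof.
elim: p u => [|h t IH] u /=; first by split.
case/andP => /and3P [uS hS euh] /IH [pt st _]; split => //.
- by rewrite euh.
- by move=> z; rewrite inE => /orP [/eqP -> //|]; apply: st.
Qed.

Lemma nbrs_cycle (W S : {set T}) v u w : v \in W -> S \subset W -> v \notin S ->
  u != w -> e v u -> e v w -> connect (restr S) u w -> exists c, is_cycle e W c.
Proof.
move=> vW sSW vS uw evu evw /connectP [p pp lp].
case: (shortenP pp) lp => p' pp' up' _ lp.
have [pe' sp' uS] := restr_path pp'.
have p'n : p' != [::] by case: p' {pp' up' sp' uS pe'} lp => //= wu; move: uw; rewrite wu eqxx.
have uS' := uS p'n.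
exists (v :: u :: p'); split.
- by case: p' {pp' up' sp' uS pe' lp} p'n uS.
- rewrite /= vW (subsetP sSW _ uS') /=.
  by apply/allP => z /sp' zS; apply: (subsetP sSW).
- rewrite cons_uniq up' andbT inE negb_or; apply/andP; split.
  + by apply/eqP => vu; move: vS; rewrite vu uS'.
  + by apply/negP => /sp' zS; move: vS; rewrite zS.
- rewrite /cycle /= evu rcons_path pe' -lp /=. by rewrite e_sym.
Qed.

Lemma ext_cycle (V : {set T}) : (forall u, u \in V -> 2 <= deg e V u) ->
  forall n z l, #|V| <= n + size l -> z \in V -> {subset l <= V} -> path e z l ->
  uniq (z :: l) -> exists c, is_cycle e V c.
Proof.
move=> hdeg; elim=> [|n IH] z l hsz zV lV pl ul.
  have : #|z :: l| <= #|V|.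
    by apply: subset_leq_card; apply/subsetP => u; rewrite inE => /orP [/eqP ->|/lV].
  by rewrite (card_uniqP ul) /= => h; have := leq_trans h hsz; rewrite add0n ltnn.
set N := [set u in V | e z u].
have hN : 2 <= #|N| by apply: hdeg.
case: (boolP [exists w in N, w \notin z :: l]).
  case/exists_inP => w wN wnl.
  apply: (IH w (z :: l)) => //=.
  - by rewrite addnS -addSn.
  - by move: wN; rewrite inE => /andP [].
  - by move=> u; rewrite inE => /orP [/eqP ->|/lV].
  - by rewrite pl andbT e_sym; move: wN; rewrite inE => /andP [].
  - by rewrite wnl.
move/exists_inPn => hall.
case: l hsz lV pl ul hall => [|a l'] hsz lV pl ul hall.
  have : 0 < #|N| by lia.
  rewrite card_gt0 => /set0Pn [w wN]; move: (hall w wN); rewrite inE => /negPn /eqP wz.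
  by move: wN; rewrite inE wz e_irr andbF.
have : 0 < #|N :\ a| by move: hN; rewrite (cardsD1 a N); case: (a \in N) => /=; lia.
rewrite card_gt0 => /set0Pn [w]; rewrite !inE => /andP [wa /andP [wV ezw]].
have wN : w \in N by rewrite inE wV ezw.
move: (hall w wN) => /negPn; rewrite !inE (negbTE wa) /= => /orP [/eqP wz|wl'].
  by move: ezw; rewrite wz e_irr.
case/splitPr: wl' pl ul lV hsz => l1 l2 pl ul lV hsz.
have ecat : [:: z, a & l1 ++ w :: l2] = (z :: a :: rcons l1 w) ++ l2 by rewrite /= cat_rcons.
exists (z :: a :: rcons l1 w); split.
- by rewrite /= size_rcons.
- apply/allP => u; rewrite !inE mem_rcons inE => /or4P [/eqP ->//|/eqP ->|/eqP ->|ul1].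
  + by apply: (lV a); rewrite inE eqxx.
  + by apply: (lV w); rewrite !(inE, mem_cat) eqxx !orbT.
  + by apply: (lV u); rewrite !(inE, mem_cat) ul1 !orbT.
- by move: ul; rewrite ecat cat_uniq => /andP [].
- rewrite /cycle rcons_path last_cons last_rcons e_sym ezw andbT.
  by move: pl; rewrite -[path e z _]/(path e z (a :: l1 ++ w :: l2)) -cat_rcons -cat_cons cat_path => /andP [].
Qed.

Lemma mindeg_cycle (V : {set T}) : V != set0 -> (forall u, u \in V -> 2 <= deg e V u) ->
  exists c, is_cycle e V c.
Proof.
case/set0Pn => z zV hdeg; by apply: (ext_cycle hdeg (n := #|V|) (z := z) (l := [::])) => //=; rewrite addn0.
Qed.

Section Exchange.
Variables (V F Y : {set T}) (x : T).
Hypothesis hdeg : forall u, u \in V :\: F -> deg e V u <= 2.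
Hypothesis hY : Y \subset V :\: F.
Hypothesis hW : forest e (V :\: Y).
Hypothesis xV : x \in V.
Hypothesis xY : x \notin Y.

Let S := (V :\: Y) :\ x.

Lemma S_V z : z \in S -> z \in V.
Proof. by rewrite !inE => /and3P []. Qed.

Lemma notS_Y z : z \in V -> z != x -> z \notin S -> z \in Y.
Proof. by move=> zV zx; rewrite !inE zV zx /= andbT negbK. Qed.

Lemma good_forest y p q : y \in Y -> p != q -> p \in V -> q \in V -> e y p -> e y q ->
  ~ [/\ p \in S, q \in S & connect (restr S) p q] ->
  forest e ((V :\ x) :\: (Y :\ y)).
Proof.
move=> yY pq pV qV eyp eyq hng [d hd].
have hd' := hd; case: hd' => sz allU ud cd.
have inU z : z \in d -> z \in (V :\ x) :\: (Y :\ y) by move=> zd; exact: (allP allU z zd).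
case: (boolP (y \in d)) => yd; last first.
  apply: hW; exists d; split => //; apply/allP => z zd.
  move: (inU z zd); rewrite !inE => /and3P [zY zx zV].
  have zy : z != y by apply/eqP => ezy; move: yd; rewrite -ezy zd.
  by rewrite zV andbT; move: zY; rewrite zy.
have [a [b [ab eya eyb [ad bd ay bY hc]]]] := cycle_nbrs hd yd.
have hdS z : z \in d -> z != y -> z \in S.
  move=> zd zy; move: (inU z zd); rewrite !inE => /and3P [zY zx zV].
  by rewrite zx zV andbT; move: zY; rewrite zy.
have aS := hdS a ad ay; have bS := hdS b bd bY.
have cab := hc S hdS.
set N := [set u in V | e y u].
have hN : #|N| <= 2 by apply: hdeg; apply: (subsetP hY).
have inN z : z \in V -> e y z -> z \in N by move=> zV ez; rewrite inE zV ez.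
have in2 z : z \in N -> z \in [set p; q].
  move=> zN; apply/negPn/negP => zn.
  have : #|z |: [set p; q]| <= #|N|.
    apply: subset_leq_card; apply/subsetP => u; rewrite !inE => /or3P [/eqP ->|/eqP ->|/eqP ->];
      [by move: zN; rewrite inE| by rewrite pV eyp| by rewrite qV eyq].
  by rewrite cardsU1 zn cards2 pq => h; have := leq_trans h hN.
have := in2 a (inN a (S_V aS) eya); have := in2 b (inN b (S_V bS) eyb).
rewrite !inE => /orP [/eqP eb|/eqP eb] /orP [/eqP ea|/eqP ea]; subst a b.
- by move: ab; rewrite eqxx.
- apply: hng; split => //; by rewrite (sym_connect_sym (@restr_sym S)).
- by apply: hng.
- by move: ab; rewrite eqxx.
Qed.

Hypothesis NG : forall y p q, y \in Y -> p != q -> p \in V -> q \in V -> e y p -> e y q ->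
  [/\ p \in S, q \in S & connect (restr S) p q].

Lemma walk n : forall l p, size l <= n -> p \in S -> path e p (rcons l x) ->
  uniq (p :: rcons l x) -> {subset l <= V} ->
  last p l \in S /\ connect (restr S) p (last p l).
Proof.
elim: n => [|n IH] [|q l'] p //= hsz pS; try by split.
move=> /andP [epq pth] /andP [pn uq] lV.
have qV : q \in V by apply: lV; rewrite inE eqxx.
have pV := S_V pS.
move: pn uq; rewrite !inE !mem_rcons !inE => /norP [pq /norP [px pl']] /andP [/norP [qx ql'] uq].
case: (boolP (q \in S)) => qS.
  have u1 : uniq (q :: rcons l' x) by rewrite /= mem_rcons inE negb_or qx ql'.
  have s1 : {subset l' <= V} by move=> z zl; apply: lV; rewrite inE zl orbT.
  have [h1 h2] := IH l' q (ltnSE hsz) qS pth u1 s1.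
  split; first by move: h1; rewrite !inE. apply: (connect_trans _ h2); apply: connect1; by rewrite /restr /= pS qS epq.
have qY : q \in Y by apply: notS_Y.
case: l' hsz pth pl' ql' uq lV => [|r l''] hsz pth pl' ql' uq lV.
  move: pth => /= /andP [eqx _].
  have eqp : e q p by rewrite e_sym.
  have [_ + _] := NG qY px pV xV eqp eqx.
  by rewrite !inE eqxx.
move: pth => /= /andP [eqr pth].
move: pl'; rewrite inE => /norP [pr pl''].
move: uq; rewrite /= mem_rcons !inE => /andP [/norP [rx rl''] uq].
have rV : r \in V by apply: lV; rewrite !inE eqxx orbT.
have eqp : e q p by rewrite e_sym.
have [_ rS cpr] := NG qY pr pV rV eqp eqr.
have hsz' : size l'' <= n by move: hsz => /=; rewrite ltnS => /ltnW.
have u1 : uniq (r :: rcons l'' x) by rewrite /= mem_rcons inE negb_or rx rl''.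
have s1 : {subset l'' <= V} by move=> z zl; apply: lV; rewrite !inE zl !orbT.
have [h1 h2] := IH l'' r hsz' rS pth u1 s1.
split; first by move: h1; rewrite !inE. exact: (connect_trans cpr h2).
Qed.

Lemma NG_false c : is_cycle e V c -> x \in c -> False.
Proof.
case=> sz allV uc cc xc.
case: (rot_to xc) => i s hrot.
have cy' : cycle e (x :: s) by rewrite -hrot rot_cycle.
have uq' : uniq (x :: s) by rewrite -hrot rot_uniq.
have sz' : 3 <= size (x :: s) by rewrite -hrot size_rot.
have memV z : z \in x :: s -> z \in V by rewrite -hrot mem_rot => zc; exact: (allP allV z zc).
case: s hrot cy' uq' sz' memV => [|c1 [|c2 s']] // hrot cy' uq' sz' memV.
have P1 : e x c1 && path e c1 (rcons (c2 :: s') x) by exact: cy'.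
move/andP: P1 => [exc1 pth].
have c1V : c1 \in V by apply: memV; rewrite !inE eqxx orbT.
have c2V : c2 \in V by apply: memV; rewrite !inE eqxx !orbT.
move: (uq'); rewrite /= !inE => /andP [/norP [xc1 /norP [xc2 xs']] /andP [/norP [c12 c1s'] _]].
have c1S : c1 \in S.
  apply/negPn/negP => c1S.
  have c1Y : c1 \in Y by apply: notS_Y; rewrite // eq_sym.
  move: pth => /= /andP [ec12 _].
  have ec1x : e c1 x by rewrite e_sym.
  have [+ _ _] := NG c1Y xc2 xV c2V ec1x ec12.
  by rewrite !inE eqxx.
have uw : uniq (c1 :: rcons (c2 :: s') x).
  by rewrite -rcons_cons rcons_uniq; move: uq'; rewrite cons_uniq => /andP [-> ->].
have sV : {subset (c2 :: s') <= V} by move=> z zs; apply: memV; by rewrite in_cons in_cons zs !orbT.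
have [lS cl] := walk (leqnn (size (c2 :: s'))) c1S pth uw sV.
move: pth; rewrite rcons_path => /andP [_ elx].
apply: hW; apply: (nbrs_cycle (v := x) (S := S) _ _ _ _ exc1 _ cl).
- by rewrite !inE xY xV.
- by apply/subsetP => z; rewrite !inE => /andP [].
- by rewrite !inE eqxx.
- apply/eqP => el; have : last c1 (c2 :: s') \in c2 :: s' by exact: (mem_last c2 s').
  by rewrite -el inE (negbTE c12) (negbTE c1s').
- by rewrite e_sym.
Qed.

End Exchange.

Lemma exchange (V F Y : {set T}) x c : (forall u, u \in V :\: F -> deg e V u <= 2) ->
  Y \subset V :\: F -> forest e (V :\: Y) -> is_cycle e V c -> x \in c -> x \notin Y ->
  exists y, y \in Y /\ forest e ((V :\ x) :\: (Y :\ y)).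
Proof.
move=> hdeg hY hW hc xc xY.
have xV : x \in V by case: hc => _ /allP H _ _; exact: H.
apply: NNPP => hne.
apply: (NG_false hW xV xY _ hc xc) => y p q yY pq pV qV eyp eyq.
apply: NNPP => hn; apply: hne; exists y; split => //.
exact: (good_forest hdeg hY hW yY pq pV qV eyp eyq hn).
Qed.

Lemma cycle_in (V : {set T}) c z : is_cycle e V c -> z \in c -> z \in V.
Proof. by case=> _ /allP H _ _; exact: H. Qed.

Lemma loop_sound F V X0 X' : loop4 e F V X0 X' ->
  exists D, [/\ X' = D :|: X0, D \subset V :\: F & forest e (V :\: D)].
Proof.
elim=> {V X0 X'} [V X fV|V X X' c x hc xc xF _ [D [-> sD fD]]].
  by exists set0; rewrite set0U sub0set setD0.
exists (x |: D); split.
- by rewrite setUA (setUC D).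
- apply/subsetP => z; rewrite !inE => /orP [/eqP ->|zD].
  + by rewrite xF (cycle_in hc xc).
  + by move: (subsetP sD z zD); rewrite !inE => /and3P [-> _ ->].
- by rewrite -setDDl.
Qed.

Lemma deg_sub (V : {set T}) x u : deg e (V :\ x) u <= deg e V u.
Proof. by apply: subset_leq_card; apply/subsetP => z; rewrite !inE => /andP [/andP [_ ->] ->]. Qed.

Lemma loop_opt F V X0 X' : loop4 e F V X0 X' ->
  (forall u, u \in V :\: F -> deg e V u <= 2) ->
  forall Y : {set T}, Y \subset V :\: F -> forest e (V :\: Y) -> #|X'| <= #|X0| + #|Y|.
Proof.
elim=> {V X0 X'} [V X fV|V X X' c x hc xc xF _ IH] hdeg Y hY hW.
  exact: leq_addr.
have hdeg' : forall u, u \in (V :\ x) :\: F -> deg e (V :\ x) u <= 2.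
  move=> u; rewrite !inE => /and3P [uF ux uV]; apply: leq_trans (deg_sub _ _ _) _.
  by apply: hdeg; rewrite !inE uF uV.
have hX : #|x |: X| <= #|X|.+1 by rewrite cardsU1; case: (x \in X).
case: (boolP (x \in Y)) => xY.
  have hY' : Y :\ x \subset (V :\ x) :\: F.
    apply/subsetP => z; rewrite !inE => /andP [zx zY].
    by move: (subsetP hY z zY); rewrite !inE => /andP [-> ->]; rewrite zx.
  have hW' : forest e ((V :\ x) :\: (Y :\ x)).
    suff -> : (V :\ x) :\: (Y :\ x) = V :\: Y by [].
    apply/setP => z; rewrite !inE; case: (eqVneq z x) => [->|] //=.
    by rewrite xY.
  have := IH hdeg' _ hY' hW'.
  by rewrite (cardsD1 x Y) xY => h; apply: leq_trans h _; rewrite addnA addn1 leq_add2r.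
have [y [yY fy]] := exchange hdeg hY hW hc xc xY.
have hY' : Y :\ y \subset (V :\ x) :\: F.
  apply/subsetP => z; rewrite !inE => /andP [zy zY].
  have zx : z != x by apply/eqP => ezx; move: xY; rewrite -ezx zY.
  by move: (subsetP hY z zY); rewrite !inE => /andP [-> ->]; rewrite zx.
have := IH hdeg' _ hY' fy.
by rewrite (cardsD1 y Y) yY => h; apply: leq_trans h _; rewrite addnA addn1 leq_add2r.
Qed.

Lemma forest_sub (A B : {set T}) : A \subset B -> forest e B -> forest e A.
Proof.
move=> sAB fB [c [sz /allP H u cc]]; apply: fB; exists c; split => //.
by apply/allP => z zc; apply: (subsetP sAB); exact: H.
Qed.

Lemma removev (V F Y : {set T}) v : v \in Y -> Y \subset V :\: F -> forest e (V :\: Y) ->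
  [/\ Y :\ v \subset (V :\ v) :\: F, forest e ((V :\ v) :\: (Y :\ v)) & #|Y| = (#|Y :\ v|).+1].
Proof.
move=> vY hY hW; split.
- apply/subsetP => z; rewrite !inE => /andP [zv zY].
  by move: (subsetP hY z zY); rewrite !inE => /andP [-> ->]; rewrite zv.
- apply: forest_sub hW; apply/subsetP => z; rewrite !inE => /and3P [+ zv ->].
  by rewrite zv /= andbT.
- by rewrite (cardsD1 v Y) vY.
Qed.

Definition goodr (V F : {set T}) (k : int) (r : option {set T}) : Prop :=
  match r with
  | Some X => [/\ X \subset V :\: F, forest e (V :\: X) & (#|X|%:Z <= k)%R]
  | None => ~ exists Y : {set T}, [/\ Y \subset V :\: F, forest e (V :\: Y) & (#|Y|%:Z <= k)%R]
  end.

Lemma add_v (V F X : {set T}) v k : v \in V :\: F -> goodr (V :\ v) F (k - 1)%R (Some X) ->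
  goodr V F k (Some (v |: X)).
Proof.
move=> vVF [sX fX kX]; split.
- apply/subsetP => z; rewrite !inE => /orP [/eqP ->|zX]; first by move: vVF; rewrite !inE.
  by move: (subsetP sX z zX); rewrite !inE => /and3P [-> _ ->].
- by rewrite -setDDl.
- have : #|v |: X| <= #|X|.+1 by rewrite cardsU1; case: (v \in X).
  move: kX; set a := #|v |: X|; set b := #|X|; lia.
Qed.

Lemma add_v_none (V F : {set T}) v k : v \in V :\: F -> goodr (V :\ v) F (k - 1)%R None ->
  forall Y : {set T}, [/\ Y \subset V :\: F, forest e (V :\: Y) & (#|Y|%:Z <= k)%R] -> v \notin Y.
Proof.
move=> vVF hn Y [hY fY kY]; apply/negP => vY.
have [h1 h2 h3] := removev vY hY fY.
apply: hn; exists (Y :\ v); split => //.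
move: kY; rewrite h3; set a := #|Y :\ v|; lia.
Qed.

Lemma naive_correct V k F r : naive e V k F r -> goodr V F k r.
Proof.
elim=> {V k F r}.
- move=> V k F hk [Y [_ _ hY]]; move: hY; set a := #|Y|; lia.
- move=> V k F hk ->; split.
  + exact: sub0set.
  + by case=> [[|h c] [sz /allP H _ _]] //; move: (H h (mem_head _ _)); rewrite !inE.
  + by rewrite cards0.
- move=> V k F v [X|] hk hV vV hdv _ IH.
  + case: IH => sX fX kX; split => //.
    * apply/subsetP => z zX; move: (subsetP sX z zX); rewrite !inE => /and3P [h zv ->].
      by rewrite andbT; move: h; rewrite zv.
    * move=> [d hd]; case: (boolP (v \in d)) => vd.
        have [a [b [ab eva evb [ad bd _ _ _]]]] := cycle_nbrs hd vd.
        have aV : a \in V by move: (cycle_in hd ad); rewrite !inE => /andP [].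
        have bV : b \in V by move: (cycle_in hd bd); rewrite !inE => /andP [].
        have : #|[set a; b]| <= deg e V v.
          by apply: subset_leq_card; apply/subsetP => z; rewrite !inE => /orP [/eqP ->|/eqP ->]; rewrite ?aV ?bV.
        by rewrite cards2 ab => h; move: (leq_trans h hdv).
      apply: fX; exists d; case: hd => sz /allP H u cc; split => //.
      apply/allP => z zd; move: (H z zd); rewrite !inE => /andP [-> ->]; rewrite andbT.
      by apply/eqP => ezv; move: vd; rewrite -ezv zd.
  + move=> [Y [hY fY kY]]; apply: IH; exists (Y :\ v); split.
    * apply/subsetP => z; rewrite !inE => /andP [zv zY].
      by move: (subsetP hY z zY); rewrite !inE => /andP [/negbTE -> ->]; rewrite zv andbF.
    * apply: forest_sub fY; apply/subsetP => z; rewrite !inE => /and3P [+ zv ->].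
      by rewrite zv /= andbT.
    * have : #|Y :\ v| <= #|Y| by apply: subset_leq_card; apply: subD1set.
      move: kY; set a := #|Y :\ v|; set b := #|Y|; lia.
- move=> V k F v [X|] hk hV hmin vVF htwo _ IH.
  + exact: add_v.
  + move=> [Y [hY fY kY]].
    have vY := add_v_none vVF IH (And3 hY fY kY).
    case: htwo => u [w [uw uVF wVF [evu evw cuw]]].
    apply: fY; apply: (nbrs_cycle (v := v) (S := V :&: F) _ _ _ uw evu evw cuw).
    * by move: vVF; rewrite !inE vY => /andP [_ ->].
    * apply/subsetP => z; rewrite !inE => /andP [zV zF]; rewrite zV andbT.
      by apply/negP => zY; move: (subsetP hY z zY); rewrite !inE zF.
    * by move: vVF; rewrite !inE => /andP [/negbTE -> _]; rewrite andbF.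
- move=> V k F v X hk hV hmin hntwo vVF hmax hv2 hl.
  have [D [XD sD fD]] := loop_sound hl.
  rewrite setU0 in XD; subst D.
  case: ifP => hX; first by split.
  move=> [Y [hY fY kY]].
  have hdeg : forall u, u \in V :\: F -> deg e V u <= 2 by move=> u uV; rewrite -hv2; exact: hmax.
  have := loop_opt hl hdeg hY fY.
  rewrite cards0 add0n => h; move/negP: hX; apply.
  move: kY; set a := #|X|; set b := #|Y|; lia.
- move=> V k F v X hk hV hmin hntwo vVF hmax hv2 _ IH.
  exact: add_v.
- move=> V k F v r hk hV hmin hntwo vVF hmax hv2 _ IH1 _ IH2.
  case: r IH2 => [X|] IH2.
  + case: IH2 => sX fX kX; split => //.
    apply/subsetP => z zX; move: (subsetP sX z zX); rewrite !inE negb_or => /andP [/andP [h1 _] h2].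
    by rewrite h1 h2.
  + move=> [Y [hY fY kY]].
    have vY := add_v_none vVF IH1 (And3 hY fY kY).
    apply: IH2; exists Y; split => //.
    apply/subsetP => z zY; move: (subsetP hY z zY); rewrite !inE => /andP [zF ->].
    rewrite andbT negb_or zF /=; apply/eqP => ezv; move: vY; rewrite -ezv zY.
    done.
Qed.

Lemma get_cycle (V : {set T}) : ~ forest e V -> exists c, is_cycle e V c.
Proof. by move=> h; apply: NNPP. Qed.

Lemma loop_exists F n : forall (V X0 : {set T}), #|V| <= n -> forest e (V :&: F) ->
  exists X', loop4 e F V X0 X'.
Proof.
elim: n => [|n IH] V X0 hsz hF; (case: (classic (forest e V)) => fV; first by exists X0; constructor);
  have [c hc] := get_cycle fV.
  case: c hc => [|z c] hc; first by case: hc.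
  have zV := cycle_in hc (mem_head _ _).
  by move: hsz; rewrite leqn0 => /eqP /cards0_eq V0; move: zV; rewrite V0 inE.
case: (boolP (has (fun z => z \notin F) c)) => hh; last first.
  exfalso; apply: hF; exists c; case: hc => sz /allP H uc cc; split => //.
  apply/allP => z zc; rewrite inE H //=.
  by move/hasPn: hh => /(_ z zc); rewrite negbK.
case/hasP: hh => x xc xF.
have xV := cycle_in hc xc.
have hsz' : #|V :\ x| <= n by move: hsz; rewrite (cardsD1 x V) xV.
have hF' : forest e ((V :\ x) :&: F).
  by apply: forest_sub hF; apply/subsetP => z; rewrite !inE => /andP [/andP [_ ->] ->].
have [X' hX'] := IH (V :\ x) (x |: X0) hsz' hF'.
by exists X'; apply: (loop4_step hc xc xF hX').
Qed.

Lemma forest_add (V F : {set T}) v : forest e (V :&: F) -> ~ two_nbrs_same_comp e V F v ->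
  forest e (V :&: (F :|: [set v])).
Proof.
move=> hF hn [d hd].
case: (boolP (v \in d)) => vd; last first.
  apply: hF; exists d; case: hd => sz /allP H uc cc; split => //.
  apply/allP => z zd; move: (H z zd); rewrite !inE => /andP [-> /orP [->//|/eqP ezv]].
  by move: vd; rewrite -ezv zd.
have [a [b [ab eva evb [ad bd av bv hc]]]] := cycle_nbrs hd vd.
have hS z : z \in d -> z != v -> z \in V :&: F.
  move=> zd zv; move: (cycle_in hd zd); rewrite !inE => /andP [-> /orP [->//|/eqP ezv]].
  by move: zv; rewrite ezv eqxx.
apply: hn; exists a, b; split => //; [exact: hS | exact: hS | split => //].
exact: (hc (V :&: F) hS).
Qed.

Lemma naive_exists n : forall (V F : {set T}) k, #|V| + #|V :\: F| <= n -> forest e (V :&: F) ->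
  exists r, naive e V k F r.
Proof.
elim: n => [|n IH] V F k hsz hF.
  move: hsz; rewrite leqn0 addn_eq0 => /andP [/eqP /cards0_eq V0 _].
  case: (boolP (0 <= k)%R) => hk.
    by exists (Some set0); apply: naive0_empty.
  by exists None; apply: naive0_neg; move: hk; lia.
case: (boolP (0 <= k)%R) => hk; last first.
  by exists None; apply: naive0_neg; move: hk; lia.
case: (eqVneq V set0) => [V0|hV].
  by exists (Some set0); apply: naive0_empty.
case: (boolP [exists v in V, deg e V v < 2]) => [/exists_inP [v vV hdv]|hmin0].
  have hsz' : #|V :\ v| + #|(V :\ v) :\: (F :\ v)| <= n.
    have h1 : #|(V :\ v) :\: (F :\ v)| <= #|V :\: F|.
      by apply: subset_leq_card; apply/subsetP => z; rewrite !inE => /and3P [h zv ->]; move: h; rewrite zv andbT.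
    move: hsz h1; rewrite (cardsD1 v V) vV; set a := #|V :\ v|; set b := #|V :\: F|; set c := #|_ :\: _|; lia.
  have hF' : forest e ((V :\ v) :&: (F :\ v)).
    by apply: forest_sub hF; apply/subsetP => z; rewrite !inE => /andP [/andP [_ ->] /andP [_ ->]].
  have [r hr] := IH _ _ k hsz' hF'.
  by exists r; apply: (naive1 hk hV vV hdv hr).
have hmin : forall u, u \in V -> 2 <= deg e V u.
  by move=> u uV; move/exists_inPn: hmin0 => /(_ u uV); rewrite -leqNgt.
case: (classic (exists v, v \in V :\: F /\ two_nbrs_same_comp e V F v)) => [[v [vVF htwo]]|hntwo0].
  have vV : v \in V by move: vVF; rewrite inE => /andP [].
  have hsz' : #|V :\ v| + #|(V :\ v) :\: F| <= n.
    have -> : (V :\ v) :\: F = (V :\: F) :\ v.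
      by apply/setP => z; rewrite !inE; case: (z == v); rewrite ?andbF.
    move: hsz; rewrite (cardsD1 v V) (cardsD1 v (V :\: F)) vV vVF; set a := #|V :\ v|; set b := #|_ :\ v|; lia.
  have hF' : forest e ((V :\ v) :&: F).
    by apply: forest_sub hF; apply/subsetP => z; rewrite !inE => /andP [/andP [_ ->] ->].
  have [r hr] := IH _ _ (k - 1)%R hsz' hF'.
  by exists (omap (fun X => v |: X) r); apply: (naive2 hk hV hmin vVF htwo hr).
have hntwo : forall u, u \in V :\: F -> ~ two_nbrs_same_comp e V F u.
  by move=> u uVF ht; apply: hntwo0; exists u.
have [u0 u0in] : exists u0, u0 \in V :\: F.
  apply: NNPP => hne.
  have VF : V :&: F = V.
    apply/setP => z; rewrite inE; case: (boolP (z \in V)) => //= zV.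
    apply: NNPP => zF; apply: hne; exists z; rewrite inE zV andbT; apply/negP => h; apply: zF; rewrite h.
    done.
  have [c hc] := mindeg_cycle hV hmin.
  by apply: hF; rewrite VF; exists c.
have [v vVF hmax] : exists2 v, v \in V :\: F & forall u, u \in V :\: F -> deg e V u <= deg e V v.
  case: (@arg_maxnP _ u0 (fun u => u \in V :\: F) (deg e V) u0in) => v vin hm.
  by exists v.
have vV : v \in V by move: vVF; rewrite inE => /andP [].
case: (eqVneq (deg e V v) 2) => hv2.
  have [X hX] := loop_exists set0 (leqnn #|V|) hF.
  by eexists; apply: (naive4 hk hV hmin hntwo vVF hmax hv2 hX).
have hsz1 : #|V :\ v| + #|(V :\ v) :\: F| <= n.
  have -> : (V :\ v) :\: F = (V :\: F) :\ v.
    by apply/setP => z; rewrite !inE; case: (z == v); rewrite ?andbF.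
  move: hsz; rewrite (cardsD1 v V) (cardsD1 v (V :\: F)) vV vVF; set a := #|V :\ v|; set b := #|_ :\ v|; lia.
have hF1 : forest e ((V :\ v) :&: F).
  by apply: forest_sub hF; apply/subsetP => z; rewrite !inE => /andP [/andP [_ ->] ->].
have [r1 hr1] := IH _ _ (k - 1)%R hsz1 hF1.
case: r1 hr1 => [X|] hr1.
  by exists (Some (v |: X)); apply: (naive5 hk hV hmin hntwo vVF hmax hv2 hr1).
have hsz2 : #|V| + #|V :\: (F :|: [set v])| <= n.
  have -> : V :\: (F :|: [set v]) = (V :\: F) :\ v.
    by apply/setP => z; rewrite !inE negb_or; case: (z == v); rewrite ?andbF //= andbT.
  move: hsz; rewrite (cardsD1 v (V :\: F)) vVF; set a := #|V|; set b := #|_ :\ v|; lia.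
have hF2 := forest_add hF (hntwo v vVF).
have [r hr] := IH _ _ k hsz2 hF2.
by exists r; apply: (naive6 hk hV hmin hntwo vVF hmax hv2 hr1 hr).
Qed.

End S.

Theorem mainTheorem2 (T : finType) (e : rel T)
  (e_sym : symmetric e) (e_irr : irreflexive e) (k : int) :
  (exists r, naive e [set: T] k set0 r) /\
  (forall r, naive e [set: T] k set0 r ->
     match r with
     | Some X => is_fvs e [set: T] X /\ (#|X|%:Z <= k)%R
     | None => ~ exists X, is_fvs e [set: T] X /\ (#|X|%:Z <= k)%R
     end).
Proof.
split.
  apply: (naive_exists e_sym e_irr (n := #|[set: T]| + #|[set: T] :\: set0|)) => //.
  by rewrite setI0; case=> [[|h c] [sz /allP H _ _]] //; move: (H h (mem_head _ _)); rewrite inE.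
move=> r hr; have := naive_correct e_sym hr.
case: r {hr} => [X|] /=.
  by rewrite setD0 => -[sX fX kX]; split => //; split.
rewrite setD0 => hn [X [[sX fX] kX]]; apply: hn; exists X; split => //.
Qed.
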